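(* Let $g,h>\tfrac12$, let $M_{\mathrm{I}},M_{\mathrm{II}}\in\mathbb{Z}_{\ge0}$, $M=M_{\mathrm{I}}+M_{\mathrm{II}}$, let $\mathcal{D}=((d_1,t_1),\ldots,(d_M,t_M))$ be an ordered list of pairwise distinct seed labels as described in the context, containing exactly $M_{\mathrm{I}}$ labels of Type I and $M_{\mathrm{II}}$ labels of Type II, and let $n\in\mathbb{Z}_{\ge0}$. For $N\in\{M,M+1\}$, $j=1,\ldots,N$ and $-1<\eta<1$ define $$X^{(N)}_{(\mathrm{v},\mathrm{I}),j}(\eta)=\frac{(-1)^{j-1}}{2^{j-1}}\big(h-\tfrac12-\mathrm{v}\big)_{j-1}\Big(\frac{1+\eta}{2}\Big)^{N-j}P^{(g+j-\frac32,\,\frac32-h-j)}_{\mathrm{v}}(\eta),$$ $$X^{(N)}_{(\mathrm{v},\mathrm{II}),j}(\eta)=\frac{1}{2^{j-1}}\big(g-\tfrac12-\mathrm{v}\big)_{j-1}\Big(\frac{1-\eta}{2}\Big)^{N-j}P^{(\frac32-g-j,\,h+j-\frac32)}_{\mathrm{v}}(\eta),$$ $$Z^{(N)}_{n,j}(\eta)=\frac{1}{2^{j-1}}(n+g+h)_{j-1}P^{(g+j-\frac32,\,h+j-\frac32)}_{n+1-j}(\eta),$$ and let $\vec X^{(N)}_{(\mathrm{v},t)}$, $\vec Z^{(N)}_n$ denote the corresponding column vectors $(\cdot)_{j=1}^N$. Then for $-1<\eta<1$, with $A(\eta)=\big(\frac{1+\eta}{2}\big)^{-M_{\mathrm{I}}(M_{\mathrm{I}}-1)}\big(\frac{1-\eta}{2}\big)^{-M_{\mathrm{II}}(M_{\mathrm{II}}-1)}$,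 $$\Xi_{\mathcal{D}}(\eta)=A(\eta)\det\big(\vec X^{(M)}_{(d_1,t_1)}(\eta)\ \cdots\ \vec X^{(M)}_{(d_M,t_M)}(\eta)\big),$$ $$P_{\mathcal{D},n}(\eta)=A(\eta)\det\big(\vec X^{(M+1)}_{(d_1,t_1)}(\eta)\ \cdots\ \vec X^{(M+1)}_{(d_M,t_M)}(\eta)\ \vec Z^{(M+1)}_n(\eta)\big).$$
   Context: $(a)_k=a(a+1)\cdots(a+k-1)$, $(a)_0=1$. For real $\alpha,\beta$ and $m\in\mathbb{Z}_{\ge0}$ the Jacobi polynomial is $P^{(\alpha,\beta)}_m(\eta)=\frac{1}{m!}\sum_{k=0}^m\frac{(-m)_k(m+\alpha+\beta+1)_k(\alpha+k+1)_{m-k}}{k!}\big(\frac{1-\eta}{2}\big)^k$ (equal to $\frac{(\alpha+1)_m}{m!}\sum_{k}\frac{(-m)_k(m+\alpha+\beta+1)_k}{k!(\alpha+1)_k}(\frac{1-\eta}{2})^k$ when defined), and $P^{(\alpha,\beta)}_m\equiv0$ for $m<0$. For $a\in\mathbb{R}$, $[a]'$ denotes the greatest integer strictly less than $a$. Fix $g,h>\frac12$. A seed label is a pair $(\mathrm{v},t)$, $t\in\{\mathrm{I},\mathrm{II}\}$, with $\mathrm{v}\in\{0,1,\ldots,[h-\frac12]'\}$ if $t=\mathrm{I}$ and $\mathrm{v}\in\{0,1,\ldots,[g-\frac12]'\}$ if $t=\mathrm{II}$. For $-1<\eta<1$ define $\mu_{(\mathrm{v},\mathrm{I})}(\eta)=\big(\frac{1+\eta}{2}\big)^{\frac12-h}P^{(g-\frac12,\frac12-h)}_{\mathrm{v}}(\eta)$,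 $\mu_{(\mathrm{v},\mathrm{II})}(\eta)=\big(\frac{1-\eta}{2}\big)^{\frac12-g}P^{(\frac12-g,h-\frac12)}_{\mathrm{v}}(\eta)$, and $P_n(\eta)=P^{(g-\frac12,h-\frac12)}_n(\eta)$. The Wronskian with respect to $\eta$ is $\mathrm{W}[f_1,\ldots,f_m](\eta)=\det\big(\frac{d^{j-1}f_k}{d\eta^{j-1}}\big)_{1\le j,k\le m}$. For an ordered list $\mathcal{D}=((d_1,t_1),\ldots,(d_M,t_M))$ of seed labels with $M_{\mathrm{I}}$ of Type I and $M_{\mathrm{II}}$ of Type II, the denominator polynomial and multi-indexed Jacobi polynomials are $\Xi_{\mathcal{D}}(\eta)=\mathrm{W}[\mu_{(d_1,t_1)},\ldots,\mu_{(d_M,t_M)}](\eta)\big(\frac{1-\eta}{2}\big)^{(M_{\mathrm{I}}+g-\frac12)M_{\mathrm{II}}}\big(\frac{1+\eta}{2}\big)^{(M_{\mathrm{II}}+h-\frac12)M_{\mathrm{I}}}$ and $P_{\mathcal{D},n}(\eta)=\mathrm{W}[\mu_{(d_1,t_1)},\ldots,\mu_{(d_M,t_M)},P_n](\eta)\big(\frac{1-\eta}{2}\big)^{(M_{\mathrm{I}}+g+\frac12)M_{\mathrm{II}}}\big(\frac{1+\eta}{2}\big)^{(M_{\mathrm{II}}+h+\frac12)M_{\mathrm{I}}}$. *)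

(* Defs.v *)
From HB Require Import structures.
From mathcomp Require Import all_boot all_order all_algebra.
From mathcomp Require Import all_classical all_reals.
From mathcomp Require Import topology normedtype derive exp.
Set Implicit Arguments. Unset Strict Implicit. Unset Printing Implicit Defensive.
Import Order.TTheory GRing.Theory Num.Theory.
Local Open Scope ring_scope.

Section Defs.
Variable R : realType.

Definition poch (a : R) (k : nat) : R := \prod_(i < k) (a + i%:R).

(* Jacobi polynomial P^{(al,be)}_m(x), m : nat, via the first (always defined) formula *)
Definition jacobiP (al be : R) (m : nat) (x : R) : R :=
  (m`!%:R)^-1 * \sum_(k < m.+1)
    (poch (- m%:R) k * poch (m%:R + al + be + 1) k
       * poch (al + k%:R + 1) (m - k) / (k`!%:R)) * ((1 - x) / 2) ^+ k.

Definition jacobiPz (al be : R) (m : int) (x : R) : R :=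
  match m with Posz k => jacobiP al be k x | Negz _ => 0 end.

Inductive stype := TI | TII.

Definition seed_ok (g h : R) (v : nat) (t : stype) : Prop :=
  match t with TI => v%:R < h - 1/2 | TII => v%:R < g - 1/2 end.

Definition mu (g h : R) (v : nat) (t : stype) (x : R) : R :=
  match t with
  | TI => ((1 + x) / 2) `^ (1/2 - h) * jacobiP (g - 1/2) (1/2 - h) v x
  | TII => ((1 - x) / 2) `^ (1/2 - g) * jacobiP (1/2 - g) (h - 1/2) v x
  end.

Definition Pn (g h : R) (n : nat) (x : R) : R := jacobiP (g - 1/2) (h - 1/2) n x.

Definition wronskian (m : nat) (f : 'I_m -> R -> R) (x : R) : R :=
  \det (\matrix_(j < m, k < m) @derive1n R R^o j (f k) x).

Definition countI (M : nat) (t : 'I_M -> stype) : nat :=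
  (\sum_(i < M) (if t i is TI then 1 else 0))%N.
Definition countII (M : nat) (t : 'I_M -> stype) : nat :=
  (\sum_(i < M) (if t i is TII then 1 else 0))%N.

Definition XiD (g h : R) (M : nat) (d : 'I_M -> nat) (t : 'I_M -> stype) (x : R) : R :=
  let MI := (countI t)%:R in let MII := (countII t)%:R in
  wronskian (fun k => mu g h (d k) (t k)) x
  * ((1 - x) / 2) `^ ((MI + g - 1/2) * MII)
  * ((1 + x) / 2) `^ ((MII + h - 1/2) * MI).

(* list D followed by P_n *)
Definition ext_fun (g h : R) (M : nat) (d : 'I_M -> nat) (t : 'I_M -> stype) (n : nat)
  (k : 'I_M.+1) : R -> R :=
  match unlift ord_max k with
  | Some k' => mu g h (d k') (t k')
  | None => Pn g h n
  end.

Definition PDn (g h : R) (M : nat) (d : 'I_M -> nat) (t : 'I_M -> stype) (n : nat) (x : R) : R :=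
  let MI := (countI t)%:R in let MII := (countII t)%:R in
  wronskian (ext_fun g h d t n) x
  * ((1 - x) / 2) `^ ((MI + g + 1/2) * MII)
  * ((1 + x) / 2) `^ ((MII + h + 1/2) * MI).

(* X^{(N)}_{(v,t),j}(x) with j = j' + 1, j' : 'I_N (0-based) *)
Definition Xent (g h : R) (N : nat) (v : nat) (t : stype) (j : nat) (x : R) : R :=
  match t with
  | TI => (-1) ^+ j / 2 ^+ j * poch (h - 1/2 - v%:R) j * ((1 + x) / 2) ^+ (N.-1 - j)
          * jacobiP (g + j%:R - 1/2) (1/2 - h - j%:R) v x
  | TII => 1 / 2 ^+ j * poch (g - 1/2 - v%:R) j * ((1 - x) / 2) ^+ (N.-1 - j)
          * jacobiP (1/2 - g - j%:R) (h + j%:R - 1/2) v x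
  end.

(* Z^{(N)}_{n,j}(x) with j = j' + 1 : index n + 1 - j = n - j' (possibly negative) *)
Definition Zent (g h : R) (n : nat) (j : nat) (x : R) : R :=
  1 / 2 ^+ j * poch (n%:R + g + h) j
  * jacobiPz (g + j%:R - 1/2) (h + j%:R - 1/2) (n%:Z - j%:Z) x.

Definition Amul (MI MII : nat) (x : R) : R :=
  ((1 + x) / 2) ^- (MI * (MI - 1)) * ((1 - x) / 2) ^- (MII * (MII - 1)).

End Defs.

(* Main.v *)
Require Import Defs.
From HB Require Import structures.
From mathcomp Require Import all_boot all_order all_algebra.
From mathcomp Require Import all_classical all_reals.
From mathcomp Require Import topology normedtype derive exp.
From mathcomp Require Import ring lra zify.
Import Order.TTheory GRing.Theory Num.Theory numFieldNormedType.Exports.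
Local Open Scope ring_scope.
Section S.
Variable R : realType.
Lemma dy (x : R) : is_derive x 1 (fun z : R => (1 - z) / 2) (- 2^-1).
Proof.
have h1 : is_derive x 1 ((cst 1 - id) * cst 2^-1 : R -> R) ((1 - x) *: 0 + 2^-1 *: (0 - 1)).
  by apply: is_deriveM.
have e : (fun z : R => (1 - z) / 2) = ((cst 1 - id) * cst 2^-1 : R -> R) by [].
rewrite e; apply: (is_derive_eq h1).
by rewrite scaler0 add0r sub0r scalerN /GRing.scale /= mulr1.
Qed.

Lemma dpow (c : R) (k : nat) (x : R) : is_derive x 1 (fun z : R => c * ((1-z)/2)^+k)
   (- 2^-1 * (k%:R * c * ((1-x)/2)^+k.-1)).
Proof.
have h1 := is_deriveX k (dy x).
have h2 := is_deriveM (@is_derive_cst R R^o R^o c x 1) h1.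
have e : (fun z : R => c * ((1-z)/2)^+k) = (cst c * (fun z : R => (1 - z) / 2) ^+ k) .
  by apply/funext => z /=; rewrite /GRing.mul /= ; congr (_ * _); elim: k {h1 h2} => // k IH; rewrite !exprS IH.
rewrite e; apply: (is_derive_eq h2).
rewrite scaler0 addr0 /GRing.scale /=.
rewrite /cst; ring.
Qed.

Lemma dsum (p : nat -> R) (n : nat) (x : R) : is_derive x 1
  (fun z : R => \sum_(k < n.+1) p k * ((1 - z)/2) ^+ k)
  (- 2^-1 * \sum_(k < n) (k.+1)%:R * p k.+1 * ((1-x)/2) ^+ k).
Proof.
have h := @is_derive_sum R R^o R^o n.+1 (fun k z => p k * ((1 - z)/2) ^+ k) x 1
   (fun k : 'I_n.+1 => - 2^-1 * (k%:R * p k * ((1-x)/2)^+k.-1)) (fun k => dpow _ _ _).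
have e : (fun z : R => \sum_(k < n.+1) p k * ((1 - z)/2) ^+ k) = 
   \sum_(k < n.+1) (fun z : R => p k * ((1 - z)/2) ^+ k).
  by apply/funext => z; rewrite fct_sumE.
rewrite e; apply: (is_derive_eq h).
rewrite big_ord_recl /=.
by rewrite !mul0r mulr0 add0r mulr_sumr; apply: eq_bigr => i _.
Qed.
Lemma natrS (n : nat) : (n.+1%:R : R) = n%:R + 1.
Proof. by rewrite natr1. Qed.
Lemma pochS (a : R) k : poch a k.+1 = a * poch (a + 1) k.
Proof.
rewrite /poch big_ord_recl /= addr0; congr (_ * _); apply: eq_bigr => i _.
by rewrite /bump /= natrS; ring.
Qed.
Lemma pochSr (a : R) k : poch a k.+1 = poch a k * (a + k%:R).
Proof. by rewrite /poch big_ord_recr. Qed.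
Lemma poch0 (a : R) : poch a 0 = 1.
Proof. by rewrite /poch big_ord0. Qed.
Lemma poch_eq (a b : R) k : a = b -> poch a k = poch b k.
Proof. by move->. Qed.
Lemma fact_neq0 k : (k`!%:R : R) != 0.
Proof. by rewrite pnatr_eq0 -lt0n fact_gt0. Qed.

Definition jc (a b : R) (n k : nat) : R :=
  poch (- n%:R) k * poch (n%:R + a + b + 1) k * poch (a + k%:R + 1) (n - k) / (k`!%:R).

Lemma jacobiPE (a b : R) (n : nat) (x : R) : jacobiP a b n x =
  (n`!%:R)^-1 * \sum_(k < n.+1) jc a b n k * ((1 - x) / 2) ^+ k.
Proof. by []. Qed.

Lemma djac (a b : R) (n : nat) (x : R) : is_derive x 1 (jacobiP a b n)
  ((n`!%:R)^-1 * (- 2^-1 * \sum_(k < n) (k.+1)%:R * jc a b n k.+1 * ((1-x)/2) ^+ k)).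
Proof.
have h := is_deriveM (@is_derive_cst R R^o R^o (n`!%:R^-1) x 1) (dsum (jc a b n) n x).
have e : jacobiP a b n = (cst (n`!%:R^-1) * (fun z : R => \sum_(k < n.+1) jc a b n k * ((1 - z)/2) ^+ k)).
  by apply/funext => z.
rewrite e; apply: (is_derive_eq h).
by rewrite scaler0 addr0 /GRing.scale /= /cst.
Qed.

Lemma D3 (a b : R) (n : nat) (x : R) : is_derive x 1 (jacobiP a b n.+1)
   ((n.+1%:R + a + b + 1) / 2 * jacobiP (a + 1) (b + 1) n x).
Proof.
apply: (is_derive_eq (djac a b n.+1 x)).
rewrite jacobiPE !mulr_sumr; apply: eq_bigr => k _.
rewrite /jc !pochS !factS !natrM subSS.
rewrite (@poch_eq (- n.+1%:R + 1) (- n%:R)); last by rewrite natrS; ring.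
rewrite (@poch_eq (n.+1%:R + a + b + 1 + 1) (n%:R + (a + 1) + (b + 1) + 1)); last by rewrite natrS; ring.
rewrite (@poch_eq (a + k.+1%:R + 1) (a + 1 + k%:R + 1)); last by rewrite natrS; ring.
field.
by rewrite !fact_neq0 !nat1r !pnatr_eq0.
Qed.
Lemma jc_out (a b : R) n : jc a b n n.+1 = 0.
Proof.
rewrite /jc pochSr.
have -> : - n%:R + n%:R = 0 :> R by ring.
by rewrite !(mulr0, mul0r).
Qed.

Lemma coefD1 (a b : R) (n k : nat) : (k <= n)%N ->
  (n%:R + b) * jc (a + 1) (b - 1) n k = (b + k%:R) * jc a b n k - (k.+1)%:R * jc a b n k.+1.
Proof.
rewrite leq_eqVlt => /orP [/eqP ->|lt].
  rewrite jc_out mulr0 subr0 /jc subnn !poch0 !mulr1.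
  rewrite (@poch_eq (n%:R + (a + 1) + (b - 1) + 1) (n%:R + a + b + 1)); last by ring.
  ring.
have [m ->] : exists m, n = (k + m.+1)%N by exists (n - k.+1)%N; lia.
rewrite /jc.
have -> : (k + m.+1 - k = m.+1)%N by lia.
have -> : (k + m.+1 - k.+1 = m)%N by lia.
rewrite (pochS (a + k%:R + 1)) (pochSr (a + 1 + k%:R + 1)) (pochSr (- _)) (pochSr (_ + a + b + 1)) factS natrM.
rewrite (@poch_eq ((k + m.+1)%:R + (a + 1) + (b - 1) + 1) ((k + m.+1)%:R + a + b + 1)); last by ring.
rewrite (@poch_eq (a + k.+1%:R + 1) (a + k%:R + 1 + 1)); last by rewrite natrS; ring.
rewrite (@poch_eq (a + 1 + k%:R + 1) (a + k%:R + 1 + 1)); last by ring.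
rewrite natrD !natrS.
field.
by rewrite ?fact_neq0 /= ?natr1 ?nat1r ?pnatr_eq0.
Qed.

Lemma coefD2 (a b : R) (n k : nat) : (k <= n)%N ->
  (n%:R + a) * jc (a - 1) (b + 1) n k = (a + k%:R) * jc a b n k.
Proof.
move=> kn; rewrite /jc.
rewrite (@poch_eq (n%:R + (a - 1) + (b + 1) + 1) (n%:R + a + b + 1)); last by ring.
rewrite (@poch_eq (a - 1 + k%:R + 1) (a + k%:R)); last by ring.
have e : (a + k%:R) * poch (a + k%:R + 1) (n - k) = (n%:R + a) * poch (a + k%:R) (n - k).
  by rewrite -pochS pochSr natrB // mulrC; congr (_ * _); ring.
set A := poch (- n%:R) k; set B := poch (n%:R + a + b + 1) k.
transitivity (A * B * ((a + k%:R) * poch (a + k%:R + 1) (n - k)) / k`!%:R); last by ring.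
by rewrite e; ring.
Qed.
Lemma is_derive_comp1 (f g : R -> R) (x df dg : R) :
  is_derive x 1 f df -> is_derive (f x) 1 g dg -> is_derive x 1 (g \o f) (dg * df).
Proof.
move=> hf hg.
have d1 : derivable f x 1 by case: hf.
have d2 : derivable g (f x) 1 by case: hg.
apply: DeriveDef.
  apply/derivable1_diffP; apply: differentiable_comp; exact/derivable1_diffP.
by rewrite -derive1E derive1_comp // !derive1E !derive_val.
Qed.

Lemma du (x : R) : is_derive x 1 (fun z : R => (1 + z) / 2) (2^-1).
Proof.
have h1 : is_derive x 1 ((cst 1 + id) * cst 2^-1 : R -> R) ((1 + x) *: 0 + 2^-1 *: (0 + 1)).
  by apply: is_deriveM.
have e : (fun z : R => (1 + z) / 2) = ((cst 1 + id) * cst 2^-1 : R -> R) by [].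
rewrite e; apply: (is_derive_eq h1).
by rewrite scaler0 add0r add0r /GRing.scale /= mulr1.
Qed.

Lemma dU (b x : R) : -1 < x -> is_derive x 1 (fun z : R => ((1 + z) / 2) `^ b)
   (b * ((1 + x) / 2) `^ (b - 1) * 2^-1).
Proof.
move=> hx.
have pos : 0 < (1 + x) / 2 by apply: divr_gt0 => //; lra.
exact: (@is_derive_comp1 _ _ _ _ _ (du x) (is_derive1_powR b pos)).
Qed.

Lemma dW (a x : R) : x < 1 -> is_derive x 1 (fun z : R => ((1 - z) / 2) `^ a)
   (a * ((1 - x) / 2) `^ (a - 1) * - 2^-1).
Proof.
move=> hx.
have pos : 0 < (1 - x) / 2 by apply: divr_gt0 => //; lra.
exact: (@is_derive_comp1 _ _ _ _ _ (dy x) (is_derive1_powR a pos)).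
Qed.
Lemma sum_shift1 (c : nat -> R) (n : nat) (y : R) : c n.+1 = 0 ->
  \sum_(k < n) (k.+1)%:R * c k.+1 * y ^+ k = \sum_(k < n.+1) (k.+1)%:R * c k.+1 * y ^+ k.
Proof. by move=> h; rewrite big_ord_recr /= h mulr0 mul0r addr0. Qed.

Lemma sum_shift2 (c : nat -> R) (n : nat) (y : R) :
  y * \sum_(k < n) (k.+1)%:R * c k.+1 * y ^+ k = \sum_(k < n.+1) k%:R * c k * y ^+ k.
Proof.
rewrite big_ord_recl /= !mul0r add0r mulr_sumr; apply: eq_bigr => i _.
by rewrite /bump /= exprS; ring.
Qed.

Lemma powR_split (u b : R) : 0 < u -> u `^ b = u * u `^ (b - 1).
Proof.
move=> hu.
have -> : u `^ b = u `^ (1 + (b - 1)) by congr (_ `^ _); ring.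
rewrite (@powRD _ u 1 (b - 1)); last by rewrite (gt_eqF hu) implybT.
by rewrite powRr1 // ltW.
Qed.

Lemma D1 (a b : R) (n : nat) (x : R) : -1 < x ->
  is_derive x 1 (fun z : R => ((1 + z) / 2) `^ b * jacobiP a b n z)
    ((n%:R + b) / 2 * ((1 + x) / 2) `^ (b - 1) * jacobiP (a + 1) (b - 1) n x).
Proof.
move=> hx.
have h := is_deriveM (dU b x hx) (djac a b n x).
have e : (fun z : R => ((1 + z) / 2) `^ b * jacobiP a b n z) =
   (fun z : R => ((1 + z) / 2) `^ b) * jacobiP a b n by [].
rewrite e; apply: (is_derive_eq h).
rewrite /GRing.scale /= !jacobiPE.
have pos : 0 < (1 + x) / 2 by apply: divr_gt0 => //; lra.
rewrite (powR_split _ b pos).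
set Q := ((1 + x) / 2) `^ (b - 1).
set y := (1 - x) / 2.
have Uy : (1 + x) / 2 = 1 - y by rewrite /y; field.
rewrite Uy.
set S1 := \sum_(k < n) _.
set S0 := \sum_(k < n.+1) jc a b n k * _.
set S' := \sum_(k < n.+1) _.
have K : - (1 - y) * S1 + b * S0 = (n%:R + b) * S'.
  have -> : (n%:R + b) * S' = \sum_(k < n.+1)
      ((b + k%:R) * jc a b n k - (k.+1)%:R * jc a b n k.+1) * y ^+ k.
    by rewrite /S' mulr_sumr; apply: eq_bigr => k _; rewrite mulrA coefD1 // -ltnS.
  rewrite mulNr mulrBl mul1r sum_shift2 /S1 (sum_shift1 (jc a b n) n y (jc_out a b n)) opprB.
  rewrite /S0 mulr_sumr -sumrB -big_split /=; apply: eq_bigr => k _; ring.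
transitivity (Q * (n`!%:R)^-1 / 2 * (- (1 - y) * S1 + b * S0)); first by ring.
by rewrite K; ring.
Qed.

Lemma D2 (a b : R) (n : nat) (x : R) : x < 1 ->
  is_derive x 1 (fun z : R => ((1 - z) / 2) `^ a * jacobiP a b n z)
    (- (n%:R + a) / 2 * ((1 - x) / 2) `^ (a - 1) * jacobiP (a - 1) (b + 1) n x).
Proof.
move=> hx.
have h := is_deriveM (dW a x hx) (djac a b n x).
have e : (fun z : R => ((1 - z) / 2) `^ a * jacobiP a b n z) =
   (fun z : R => ((1 - z) / 2) `^ a) * jacobiP a b n by [].
rewrite e; apply: (is_derive_eq h).
rewrite /GRing.scale /= !jacobiPE.
have pos : 0 < (1 - x) / 2 by apply: divr_gt0 => //; lra.
rewrite (powR_split _ a pos).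
set Q := ((1 - x) / 2) `^ (a - 1).
set y := (1 - x) / 2.
set S1 := \sum_(k < n) _.
set S0 := \sum_(k < n.+1) jc a b n k * _.
set S' := \sum_(k < n.+1) _.
have K : y * S1 + a * S0 = (n%:R + a) * S'.
  have -> : (n%:R + a) * S' = \sum_(k < n.+1) ((a + k%:R) * jc a b n k) * y ^+ k.
    by rewrite /S' mulr_sumr; apply: eq_bigr => k _; rewrite mulrA coefD2 // -ltnS.
  rewrite /S1 sum_shift2 /S0 mulr_sumr -big_split /=; apply: eq_bigr => k _; ring.
transitivity (- Q * (n`!%:R)^-1 / 2 * (y * S1 + a * S0)); first by ring.
by rewrite K; ring.
Qed.
Lemma toR (p q : R) : p = q -> @eq R^o p q.
Proof. by []. Qed.

Lemma iterI (a b : R) (v j : nat) (x : R) : -1 < x ->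
  @derive1n R R^o j (fun z : R => ((1 + z) / 2) `^ b * jacobiP a b v z) x =
  (-1) ^+ j / 2 ^+ j * poch (- (v%:R + b)) j *
    (((1 + x) / 2) `^ (b - j%:R) * jacobiP (a + j%:R) (b - j%:R) v x).
Proof.
elim: j x => [|j IH] x hx.
  by rewrite derive1n0 !expr0 poch0 !subr0 addr0 divr1 !mul1r.
rewrite derive1nS derive1E.
rewrite (@near_eq_derive _ _ _ _ (fun z : R => (-1) ^+ j / 2 ^+ j * poch (- (v%:R + b)) j *
    (((1 + z) / 2) `^ (b - j%:R) * jacobiP (a + j%:R) (b - j%:R) v z))); last first.
  by near=> z; apply: IH; near: z; exact: lt_nbhsr.
have h := is_deriveZ ((-1) ^+ j / 2 ^+ j * poch (- (v%:R + b)) j) (D1 (a + j%:R) (b - j%:R) v x hx).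
case: h => _ hv; etransitivity; first exact: hv.
rewrite /GRing.scale /=.
have e1 : b - j%:R - 1 = b - j.+1%:R by rewrite natrS; ring.
have e2 : a + j%:R + 1 = a + j.+1%:R by rewrite natrS; ring.
rewrite e1 e2 pochSr !exprS natrS.
move: (poch _ _) (_ `^ _) (jacobiP _ _ _ _) => P U J.
have t0 : (2 ^+ j : R) != 0 by rewrite expf_neq0 // pnatr_eq0.
move: ((-1) ^+ j) (2 ^+ j) t0 => m t t0.
apply: toR; field.
by rewrite t0 /= ?pnatr_eq0.
Unshelve. all: by end_near. Qed.

Lemma iterII (a b : R) (v j : nat) (x : R) : x < 1 ->
  @derive1n R R^o j (fun z : R => ((1 - z) / 2) `^ a * jacobiP a b v z) x =
  1 / 2 ^+ j * poch (- (v%:R + a)) j *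
    (((1 - x) / 2) `^ (a - j%:R) * jacobiP (a - j%:R) (b + j%:R) v x).
Proof.
elim: j x => [|j IH] x hx.
  by rewrite derive1n0 !expr0 poch0 !subr0 addr0 divr1 !mul1r.
rewrite derive1nS derive1E.
rewrite (@near_eq_derive _ _ _ _ (fun z : R => 1 / 2 ^+ j * poch (- (v%:R + a)) j *
    (((1 - z) / 2) `^ (a - j%:R) * jacobiP (a - j%:R) (b + j%:R) v z))); last first.
  by near=> z; apply: IH; near: z; exact: lt_nbhsl.
have h := is_deriveZ (1 / 2 ^+ j * poch (- (v%:R + a)) j) (D2 (a - j%:R) (b + j%:R) v x hx).
case: h => _ hv; etransitivity; first exact: hv.
rewrite /GRing.scale /=.
have e1 : a - j%:R - 1 = a - j.+1%:R by rewrite natrS; ring.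
have e2 : b + j%:R + 1 = b + j.+1%:R by rewrite natrS; ring.
rewrite e1 e2 pochSr !exprS natrS.
move: (poch _ _) (_ `^ _) (jacobiP _ _ _ _) => P U J.
have t0 : (2 ^+ j : R) != 0 by rewrite expf_neq0 // pnatr_eq0.
move: (2 ^+ j) t0 => t t0.
apply: toR; field.
by rewrite t0 /= ?pnatr_eq0.
Unshelve. all: by end_near. Qed.
Lemma jacobiP0 (a b x : R) : jacobiP a b 0 x = 1.
Proof. rewrite jacobiPE big_ord1 /jc !poch0 /=; rewrite ?expr0 ?mulr1 ?invr1 ?mul1r ?divr1 //. Qed.

Lemma jacobiPzE (al be : R) (n j : nat) (x : R) :
  jacobiPz al be (n%:Z - j%:Z) x = if (j <= n)%N then jacobiP al be (n - j) x else 0.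
Proof.
case: leqP => jn.
  by rewrite subzn.
have : n%:Z - j%:Z < 0 by rewrite subr_lt0 ltz_nat.
by case: (n%:Z - j%:Z).
Qed.

Lemma iterP (a b : R) (n j : nat) : @derive1n R R^o j (jacobiP a b n) =
  fun x => poch (n%:R + a + b + 1) j / 2 ^+ j *
    (if (j <= n)%N then jacobiP (a + j%:R) (b + j%:R) (n - j) x else 0).
Proof.
elim: j => [|j IH].
  apply/funext => x; rewrite derive1n0 poch0 expr0 subn0 !addr0 /=.
  by rewrite divr1 mul1r.
rewrite derive1nS IH; apply/funext => x; rewrite derive1E.
have t0 : (2 ^+ j : R) != 0 by rewrite expf_neq0 // pnatr_eq0.
case: (ltngtP j n) => [jn | nj | ->].
- rewrite /=.
  have e : (n - j = (n - j.+1).+1)%N by lia.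
  rewrite e.
  have h := is_deriveZ (poch (n%:R + a + b + 1) j / 2 ^+ j) (D3 (a + j%:R) (b + j%:R) (n - j.+1) x).
  case: h => _ hv; etransitivity; first exact: hv.
  rewrite /GRing.scale /=.
  have e1 : a + j%:R + 1 = a + j.+1%:R by rewrite natrS; ring.
  have e2 : b + j%:R + 1 = b + j.+1%:R by rewrite natrS; ring.
  rewrite e1 e2 pochSr !exprS natrS natrB // natrS.
  move: (poch _ _) (jacobiP _ _ _ _) => P J.
  move: (2 ^+ j) t0 => t t0.
  apply: toR; field.
  by rewrite t0 /= ?pnatr_eq0.
- have -> : (fun x : R => poch (n%:R + a + b + 1) j / 2 ^+ j * 0) = cst 0.
    by apply/funext => z; rewrite mulr0.
  by rewrite derive_cst mulr0.
- rewrite subnn.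
  have -> : (fun x : R => poch (n%:R + a + b + 1) n / 2 ^+ n * jacobiP (a + n%:R) (b + n%:R) 0 x) = cst (poch (n%:R + a + b + 1) n / 2 ^+ n).
    by apply/funext => z; rewrite jacobiP0 mulr1.
  by rewrite derive_cst mulr0.
Qed.
Definition cf (g h x : R) (N : nat) (t : stype) : R :=
  match t with
  | TI => ((1 + x) / 2) `^ ((N.-1)%:R + h - 1/2)
  | TII => ((1 - x) / 2) `^ ((N.-1)%:R + g - 1/2)
  end.

Lemma powR_nat_split (u p q : R) (k : nat) : 0 < u -> p + q = k%:R ->
  u ^+ k = u `^ p * u `^ q.
Proof.
move=> hu e; rewrite -powR_mulrn ?ltW // -e powRD //.
by rewrite (gt_eqF hu) implybT.
Qed.

Lemma entryX (g h x : R) (N v j : nat) (t : stype) : (j < N)%N -> -1 < x -> x < 1 ->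
  Xent g h N v t j x = @derive1n R R^o j (mu g h v t) x * cf g h x N t.
Proof.
move=> jN x1 x2.
have jN' : (j <= N.-1)%N by rewrite -ltnS prednK //; apply: leq_ltn_trans jN.
case: t.
- have -> : mu g h v TI = fun z : R => ((1 + z) / 2) `^ (1/2 - h) * jacobiP (g - 1/2) (1/2 - h) v z by [].
  rewrite iterI // /Xent /cf.
  have pos : 0 < (1 + x) / 2 by apply: divr_gt0 => //; lra.
  rewrite (@powR_nat_split _ (1/2 - h - j%:R) ((N.-1)%:R + h - 1/2) _ pos); last first.
    by rewrite natrB //; ring.
  rewrite (_ : - (v%:R + (1/2 - h)) = h - 1/2 - v%:R); last by ring.
  rewrite (_ : g - 1/2 + j%:R = g + j%:R - 1/2); last by ring.
  by apply: toR; ring.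
- have -> : mu g h v TII = fun z : R => ((1 - z) / 2) `^ (1/2 - g) * jacobiP (1/2 - g) (h - 1/2) v z by [].
  rewrite iterII // /Xent /cf.
  have pos : 0 < (1 - x) / 2 by apply: divr_gt0 => //; lra.
  rewrite (@powR_nat_split _ (1/2 - g - j%:R) ((N.-1)%:R + g - 1/2) _ pos); last first.
    by rewrite natrB //; ring.
  rewrite (_ : - (v%:R + (1/2 - g)) = g - 1/2 - v%:R); last by ring.
  rewrite (_ : h - 1/2 + j%:R = h + j%:R - 1/2); last by ring.
  by apply: toR; ring.
Qed.

Lemma entryZ (g h x : R) (n j : nat) :
  Zent g h n j x = @derive1n R R^o j (Pn g h n) x * 1.
Proof.
have -> : Pn g h n = jacobiP (g - 1/2) (h - 1/2) n by [].
rewrite iterP /Zent jacobiPzE mulr1.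
have e : n%:R + (g - 1/2) + (h - 1/2) + 1 = n%:R + g + h :> R by field.
rewrite e.
rewrite (_ : g - 1/2 + j%:R = g + j%:R - 1/2); last by ring.
rewrite (_ : h - 1/2 + j%:R = h + j%:R - 1/2); last by ring.
by apply: toR; ring.
Qed.
Lemma det_colscale (m : nat) (A : 'M[R]_m) (c : 'I_m -> R) :
  \det (\matrix_(j < m, k < m) (A j k * c k)) = \det A * \prod_(k < m) c k.
Proof.
have -> : \matrix_(j < m, k < m) (A j k * c k) = A *m diag_mx (\row_k c k).
  by rewrite mul_mx_diag; apply/matrixP => j k; rewrite !mxE.
by rewrite det_mulmx det_diag; congr (_ * _); apply: eq_bigr => i _; rewrite mxE.
Qed.

Lemma prod_cnt (M : nat) (t : 'I_M -> stype) (A B : R) :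
  \prod_(k < M) (match t k with TI => A | TII => B end) = A ^+ countI t * B ^+ countII t.
Proof.
elim: M t => [|M IH] t.
  by rewrite big_ord0 /countI /countII !big_ord0 !expr0 mulr1.
have := IH (fun i => t (lift ord0 i)); rewrite /countI /countII => IH'.
rewrite big_ord_recl !big_ord_recl /= IH'.
case: (t ord0); rewrite ?add0n ?add1n exprS; ring.
Qed.

Lemma powR_pow (u c : R) (m : nat) : 0 < u -> (u `^ c) ^+ m = u `^ (c * m%:R).
Proof. by move=> hu; rewrite powRrM powR_mulrn // powR_ge0. Qed.

Lemma powRDp (u p q : R) : 0 < u -> u `^ p * u `^ q = u `^ (p + q).
Proof. by move=> hu; rewrite powRD // (gt_eqF hu) implybT. Qed.

Lemma expoA (MI MII : nat) (c : R) :
  (MII%:R + c) * MI%:R = - (MI * (MI - 1))%:R + ((MI + MII).-1%:R + c) * MI%:R.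
Proof.
case: MI => [|m]; first by rewrite !mulr0 mul0n oppr0 add0r.
rewrite addSn /= subn1 /= natrM natrD !natrS; ring.
Qed.

Lemma expoB (MI MII : nat) (c : R) :
  (MII%:R + c + 1/2) * MI%:R = - (MI * (MI - 1))%:R + ((MI + MII)%:R + c - 1/2) * MI%:R.
Proof.
case: MI => [|m]; first by rewrite !mulr0 mul0n oppr0 add0r.
rewrite subn1 /= natrM natrD !natrS; field.
by rewrite ?pnatr_eq0.
Qed.
End S.
Arguments cf {R}.
Arguments expoA {R}.
Arguments expoB {R}.

Theorem mainTheorem2 (R : realType) (g h : R) (MI MII : nat)
  (d : 'I_(MI + MII) -> nat) (t : 'I_(MI + MII) -> stype) (n : nat) (x : R) :
  1/2 < g -> 1/2 < h ->
  (forall k, seed_ok g h (d k) (t k)) ->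
  (forall k l, d k = d l -> t k = t l -> k = l) ->
  countI t = MI -> countII t = MII ->
  -1 < x < 1 ->
  XiD g h d t x
    = Amul MI MII x
      * \det (\matrix_(j < MI + MII, k < MI + MII) Xent g h (MI + MII) (d k) (t k) j x)
  /\
  PDn g h d t n x
    = Amul MI MII x
      * \det (\matrix_(j < (MI + MII).+1, k < (MI + MII).+1)
                match unlift ord_max k with
                | Some k' => Xent g h (MI + MII).+1 (d k') (t k') j x
                | None => Zent g h n j x
                end).
Proof.
move=> _ _ _ _ cI cII /andP[x1 x2].
have pu : 0 < (1 + x) / 2 by apply: divr_gt0 => //; lra.
have pw : 0 < (1 - x) / 2 by apply: divr_gt0 => //; lra.
split.
- rewrite /XiD /wronskian cI cII.
  have E : \matrix_(j < MI + MII, k < MI + MII) Xent g h (MI + MII) (d k) (t k) j x =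
     \matrix_(j < MI + MII, k < MI + MII)
       ((\matrix_(j0 < MI + MII, k0 < MI + MII) @derive1n R R^o j0 (mu g h (d k0) (t k0)) x) j k
         * cf g h x (MI + MII) (t k)).
    by apply/matrixP => j k; rewrite !mxE entryX.
  rewrite E det_colscale /cf prod_cnt cI cII /Amul -!powR_invn ?ltW // !powR_pow //.
  set W := \det _.
  transitivity (W * (((1 - x) / 2) `^ (- (MII * (MII - 1))%:R) *
                    ((1 - x) / 2) `^ (((MI + MII).-1%:R + g - 1 / 2) * MII%:R)) *
                   (((1 + x) / 2) `^ (- (MI * (MI - 1))%:R) *
                    ((1 + x) / 2) `^ (((MI + MII).-1%:R + h - 1 / 2) * MI%:R))); last by ring.
  rewrite !powRDp //.
  congr (W * (_ `^ _) * (_ `^ _)).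
    have := expoA MII MI (g - 1/2); rewrite addnC => H.
    by rewrite !addrA in H; exact: H.
  have := expoA MI MII (h - 1/2) => H.
  by rewrite !addrA in H; exact: H.
- rewrite /PDn /wronskian cI cII.
  pose cf' (k : 'I_(MI + MII).+1) := match unlift ord_max k with
     | Some k' => cf g h x (MI + MII).+1 (t k') | None => 1 end.
  have E : \matrix_(j < (MI + MII).+1, k < (MI + MII).+1)
                match unlift ord_max k with
                | Some k' => Xent g h (MI + MII).+1 (d k') (t k') j x
                | None => Zent g h n j x
                end =
     \matrix_(j < (MI + MII).+1, k < (MI + MII).+1)
       ((\matrix_(j0 < (MI + MII).+1, k0 < (MI + MII).+1)
           @derive1n R R^o j0 (ext_fun g h d t n k0) x) j k * cf' k).
    apply/matrixP => j k; rewrite !mxE /cf' /ext_fun.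
    case: (unlift ord_max k) => [k'|]; first exact: entryX.
    exact: entryZ.
  rewrite E det_colscale big_ord_recr /= {2}/cf' unlift_none mulr1.
  have -> : \prod_(i < MI + MII) cf' (widen_ord (leqnSn (MI + MII)) i) =
            \prod_(i < MI + MII) cf g h x (MI + MII).+1 (t i).
    apply: eq_bigr => i _; rewrite /cf'.
    have -> : widen_ord (leqnSn (MI + MII)) i = lift ord_max i.
      apply: val_inj => /=; rewrite /bump /= leqNgt ltn_ord /=; lia.
    by rewrite liftK.
  rewrite /cf prod_cnt cI cII /Amul -!powR_invn ?ltW // !powR_pow //.
  set W := \det _.
  transitivity (W * (((1 - x) / 2) `^ (- (MII * (MII - 1))%:R) *
                    ((1 - x) / 2) `^ (((MI + MII).+1.-1%:R + g - 1 / 2) * MII%:R)) *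
                   (((1 + x) / 2) `^ (- (MI * (MI - 1))%:R) *
                    ((1 + x) / 2) `^ (((MI + MII).+1.-1%:R + h - 1 / 2) * MI%:R))); last by ring.
  rewrite !powRDp //=.
  congr (W * (_ `^ _) * (_ `^ _)).
    have := expoB MII MI g; rewrite addnC => H.
    exact: H.
  have := expoB MI MII h => H.
  exact: H.
Qed.
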